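(* Let $V$ be a real vector space of odd finite dimension and $G\le\mathrm{GL}(V)$ a finite group such that $V$ is an irreducible $\mathbb{R}G$-module. Let $H$ be a characteristic subgroup of $G$ and let $S$ be an irreducible $\mathbb{R}H$-submodule of $V$. If the pair $(H,S)$ has the $E1$-property, then the pair $(G,V)$ has the $E1$-property.
   Context: For a finite group $G$, a finite-dimensional $\mathbb{R}G$-module $V$ with representation $\rho\colon G\to\mathrm{GL}(V)$, and $n\in\mathrm{GL}(V)$ of finite order normalizing $\rho(G)$, the triple $(G,V,n)$ has the $E1$-property if there is $g\in G$ such that $\rho(g)n$ has eigenvalue $1$. The pair $(G,V)$ has the $E1$-property if $(G,V,n')$ has the $E1$-property for every $n'\in\mathrm{GL}(V)$ of finite order normalizing $\rho(G)$. *)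

(* Defs.v *)
From HB Require Import structures.
From mathcomp Require Import all_boot all_order all_algebra all_fingroup all_solvable all_character.
From mathcomp Require Import all_reals.
Set Implicit Arguments. Unset Strict Implicit. Unset Printing Implicit Defensive.
Import GRing.Theory.
Local Open Scope ring_scope.

(* Matrices act on row vectors from the right (MathComp convention). *)

Definition normalizes_repr (F : fieldType) (gT : finGroupType) (G : {group gT})
  (d : nat) (rG : mx_representation F G d) (N : 'M[F]_d) : Prop :=
  (forall g, g \in G -> exists2 h, h \in G & invmx N *m rG g *m N = rG h) /\
  (forall h, h \in G -> exists2 g, g \in G & invmx N *m rG g *m N = rG h).

Definition finite_order_mx (F : fieldType) (d : nat) (N : 'M[F]_d) : Prop :=
  exists2 k : nat, (0 < k)%N & N ^+ k = 1%:M.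

Definition E1_triple (F : fieldType) (gT : finGroupType) (G : {group gT})
  (d : nat) (rG : mx_representation F G d) (N : 'M[F]_d) : Prop :=
  exists2 g, g \in G & eigenvalue (rG g *m N) 1.

Definition E1_pair (F : fieldType) (gT : finGroupType) (G : {group gT})
  (d : nat) (rG : mx_representation F G d) : Prop :=
  forall N : 'M[F]_d, N \in unitmx -> finite_order_mx N ->
    normalizes_repr rG N -> E1_triple rG N.

(* Main.v *)
Require Import Defs.
From HB Require Import structures.
From mathcomp Require Import all_boot all_order all_algebra all_fingroup all_solvable all_character.
From mathcomp Require Import all_reals.
From mathcomp Require Import polyrcf.
From Stdlib Require Import Classical.
Set Implicit Arguments. Unset Strict Implicit. Unset Printing Implicit Defensive.
Import GRing.Theory.
Local Open Scope ring_scope.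
Section Twist.
Variables (F : fieldType) (gT : finGroupType) (G H : {group gT}) (n : nat).
Variables (rG : mx_representation F G n) (sHG : H \subset G).
Local Notation rH := (subg_repr rG sHG).

Definition twR (X : 'M[F]_n) := forall h, h \in H -> exists2 h', h' \in H & rG h *m X = X *m rG h'.
Definition twL (X : 'M[F]_n) := forall h, h \in H -> exists2 h', h' \in H & X *m rG h = rG h' *m X.

Lemma twR_inv X : X \in unitmx -> twR X -> twL (invmx X).
Proof.
move=> uX tX h Hh; have [h' Hh' e] := tX h Hh; exists h' => //.
by rewrite -[LHS](mulmxK uX) -(mulmxA (invmx X)) e mulmxA mulVmx // mul1mx.
Qed.

Lemma twist_module m (M : 'M_(m, n)) X : twL X -> mxmodule rH M -> mxmodule rH (M *m X).
Proof.
move=> tX /mxmoduleP modM; apply/mxmoduleP => h Hh.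
have [h' Hh' e] := tX h Hh; rewrite -mulmxA e mulmxA submxMr //.
exact: modM.
Qed.

Lemma twist_simple M X : X \in unitmx -> twL X -> twR X -> mxsimple rH M -> mxsimple rH (M *m X).
Proof.
move=> uX tL tR [modM nzM simM]; split.
- exact: twist_module.
- by rewrite -mxrank_eq0 mxrankMfree ?row_free_unit // mxrank_eq0.
move=> U modU sUM nzU.
have : (M <= U *m invmx X)%MS.
  apply: simM; first exact: twist_module (twR_inv uX tR) modU.
    by rewrite -[M](mulmxK uX) submxMr.
  apply: contra nzU => /eqP e; apply/eqP.
  by rewrite -[U](mulmxKV uX) e mul0mx.
by move/(submxMr X); rewrite -mulmxA mulVmx // mulmx1.
Qed.

Lemma twist_iso U V X : X \in unitmx -> twL X -> mx_iso rH U V -> mx_iso rH (U *m X) (V *m X).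
Proof.
move=> uX tL [f uf homf eUV]; exists (invmx X *m f *m X).
- by rewrite !unitmx_mul uf uX unitmx_inv uX.
- apply/hom_mxP => h Hh; have [h' Hh' e] := tL h Hh.
  rewrite -(mulmxA U) e !mulmxA !(mulmxK uX).
  have /hom_mxP hf := homf; rewrite (hf h' Hh') -!mulmxA; congr (_ *m (_ *m _)).
  by rewrite e.
by rewrite !mulmxA (mulmxK uX) //; apply: eqmxMr.
Qed.

Lemma twist_component M X : X \in unitmx -> twL X -> twR X -> mxsimple rH M ->
  (component_mx rH M *m X <= component_mx rH (M *m X))%MS.
Proof.
move=> uX tL tR simM; have [I [W isoW ->]] := component_mx_def simM.
rewrite sumsmxMr; apply/sumsmx_subP => i _; apply: mx_iso_component.
  exact: twist_simple.
exact: twist_iso.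
Qed.
End Twist.

Lemma odd_eig (R : rcfType) d (A : 'M[R]_d) : odd d -> exists a, eigenvalue A a.
Proof.
move=> od; have [|a ra] := @odd_poly_root R (char_poly A).
  by rewrite size_char_poly /= negbK.
by exists a; rewrite eigenvalue_root_char.
Qed.

Section Apply.
Variables (R : realType) (gT : finGroupType) (G H : {group gT}) (n : nat).
Variables (rG : mx_representation R G n) (sHG : H \subset G).
Local Notation rH := (subg_repr rG sHG).
Variables (S : 'M[R]_n) (modS : mxmodule rH S).
Local Notation d := (\rank S).
Local Notation rS := (submod_repr modS).

Definition homS (F : 'M[R]_(d, n)) := forall h, h \in H -> rS h *m F = F *m rG h.

Lemma scalar_comm : mx_irreducible rS -> odd d -> forall A : 'M_d,
  (forall h, h \in H -> A *m rS h = rS h *m A) -> exists a, A = a%:M.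
Proof.
move=> irr od A cA; have [a ea] := odd_eig A od; exists a.
apply/eqP; rewrite -subr_eq0; apply/negPn/negP => nz.
have : A - a%:M \in unitmx.
  apply: (mx_Schur irr) nz; apply/centgmxP => h Hh.
  by rewrite mulmxBl mulmxBr cA // scalar_mxC.
by rewrite -row_free_unit -kermx_eq0; move: ea; rewrite /eigenvalue /eigenspace => /negPf ->.
Qed.

Lemma E1_apply : E1_pair rS -> forall (F : 'M_(d, n)) X, row_free F -> homS F ->
  X \in unitmx -> twR H rG X -> twL H rG X -> (exists2 k, (0 < k)%N & X ^+ k = 1) ->
  (F *m X <= F)%MS ->
  exists2 h, h \in H & exists2 u : 'rV_n, u *m (rG h *m X) = u & u != 0.
Proof.
move=> E1 F X fF hF uX tR tL [k k0 Xk] sFX.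
set Y := F *m X *m pinvmx F.
have YF : Y *m F = F *m X by rewrite mulmxKpV.
have rF : \rank F = d by apply/eqP.
have uY : Y \in unitmx.
  rewrite -row_free_unit /row_free eqn_leq rank_leq_row /=.
  have e : \rank (Y *m F) = d by rewrite YF mxrankMfree ?row_free_unit.
  by apply: leq_trans (mxrankM_maxl Y F); rewrite e.
have canF : forall A B : 'M_d, A *m F = B *m F -> A = B.
  move=> A B e; apply/eqP; rewrite -subr_eq0 -(mulmx_free_eq0 _ fF) mulmxBl e subrr.
  by [].
have YmF m : Y ^+ m *m F = F *m X ^+ m.
  elim: m => [|m IH]; first by rewrite !expr0 mul1mx mulmx1.
  by rewrite !exprS -!mulmxE -mulmxA IH mulmxA YF -mulmxA.
have [||g Hg ev] := E1 Y uY.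
- exists k => //; apply: canF; by rewrite YmF Xk mulmx1 mul1mx.
- split.
  + move=> g Hg; have [h Hh e] := tR g Hg; exists h => //.
    have e2 : rS g *m Y = Y *m rS h.
      apply: canF; rewrite -(mulmxA (rS g)) YF (mulmxA (rS g)) hF // -(mulmxA F) e.
      by rewrite (mulmxA F) -YF -(mulmxA Y) -hF // mulmxA.
    by rewrite -mulmxA e2 mulmxA mulVmx // mul1mx.
  + move=> h Hh; have [g Hg e] := tL h Hh; exists g => //.
    have e2 : rS g *m Y = Y *m rS h.
      apply: canF; rewrite -(mulmxA (rS g)) YF (mulmxA (rS g)) hF // -(mulmxA F) -e.
      by rewrite (mulmxA F) -YF -(mulmxA Y) -hF // mulmxA.
    by rewrite -mulmxA e2 mulmxA mulVmx // mul1mx.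
have [v vE nzv] := eigenvalueP ev.
exists g => //; exists (v *m F); last by rewrite mulmx_free_eq0.
rewrite mulmxA -(mulmxA v F) -hF // (mulmxA v) -(mulmxA (v *m rS g)) -YF.
by rewrite (mulmxA (v *m rS g) Y F) -(mulmxA v) vE scale1r.
Qed.
End Apply.
Section Decomp.
Variables (R : realType) (gT : finGroupType) (G H : {group gT}) (n : nat).
Variables (rG : mx_representation R G n) (sHG : H \subset G).
Local Notation rH := (subg_repr rG sHG).
Variables (S : 'M[R]_n) (modS : mxmodule rH S).
Local Notation d := (\rank S).
Local Notation rS := (submod_repr modS).
Variables (t : nat) (sig : 'I_t -> 'M[R]_(d, n)) (Sq : 'I_t -> 'M[R]_n).
Hypotheses (fsig : forall j, row_free (sig j)) (esig : forall j, (sig j :=: Sq j)%MS).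
Hypothesis dx : mxdirect (\sum_j Sq j).
Hypotheses (hsig : forall j, homS modS (sig j)).
Hypotheses (irr : mx_irreducible rS) (od : odd d).

Lemma indep (a : 'I_t -> 'M[R]_d) : \sum_j a j *m sig j = 0 -> forall j, a j = 0.
Proof.
move=> e i; apply/eqP; rewrite -(mulmx_free_eq0 _ (fsig i)) -submx0.
have /mxdirect_sumsP dxi := dx; rewrite -(dxi i isT) sub_capmx; apply/andP; split.
  by rewrite -(esig i) submxMl.
rewrite (bigD1 i) //= in e; move/eqP: e; rewrite addr_eq0 => /eqP ->.
rewrite eqmx_opp; apply: summx_sub_sums => j ji.
by rewrite -(esig j) submxMl.
Qed.

Lemma homS_lin (c : 'I_t -> R) : homS modS (\sum_j c j *: sig j).
Proof.
move=> h Hh; rewrite mulmx_sumr mulmx_suml; apply: eq_bigr => j _.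
by rewrite -scalemxAr hsig // scalemxAl.
Qed.

Lemma decomp (Fm : 'M_(d, n)) : homS modS Fm -> (Fm <= \sum_j Sq j)%MS ->
  exists c : 'I_t -> R, Fm = \sum_j c j *: sig j.
Proof.
move=> hF sF.
have : (Fm <= \sum_j <<sig j>>)%MS.
  by rewrite (eqmx_sums (fun j _ => eqmx_trans (genmxE (sig j)) (esig j))).
case/sub_sums_genmxP => u eF.
have cu j : exists a, u j == a%:M.
  have [//|a ea] := scalar_comm irr od (A := u j); last by exists a; rewrite ea.
  move=> h Hh; have e0 : \sum_j (rS h *m u j - u j *m rS h) *m sig j = 0.
    rewrite (eq_bigr (fun j => rS h *m (u j *m sig j) - u j *m (sig j *m rG h))); last first.
      by move=> k _; rewrite mulmxBl -(mulmxA (u k)) hsig // !mulmxA.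
    rewrite sumrB -mulmx_sumr -eF (eq_bigr (fun k => u k *m sig k *m rG h)); last first.
      by move=> k _; rewrite mulmxA.
    by rewrite -mulmx_suml -eF hF // subrr.
  by apply/eqP; rewrite eq_sym -subr_eq0; apply/eqP; apply: (indep e0).
exists (fun j => xchoose (cu j)); rewrite eF; apply: eq_bigr => j _.
by move: (xchooseP (cu j)); move: (xchoose (cu j)) => a /eqP ->; rewrite mul_scalar_mx.
Qed.

Lemma hom_free (Fm : 'M_(d, n)) : homS modS Fm -> Fm != 0 -> row_free Fm.
Proof.
move=> hF nzF; apply: contraR nzF; rewrite -kermx_eq0 => nzK.
have modK : mxmodule rS (kermx Fm).
  apply/mxmoduleP => h Hh; apply/sub_kermxP.
  by rewrite -mulmxA hF // mulmxA mulmx_ker mul0mx.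
have [_ irrK] := (mx_irrP _).1 irr.
have /irrK fK := modK; have := fK nzK.
rewrite -sub1mx => /sub_kermxP; rewrite mul1mx => ->; exact: eqxx.
Qed.

Variables (X : 'M[R]_n) (T : 'M[R]_d) (W0 : 'M[R]_n).
Hypotheses (uT : T \in unitmx) (hT : forall Fm, homS modS Fm -> homS modS (T *m Fm *m X)).
Hypotheses (eW0 : (W0 :=: \sum_j Sq j)%MS) (sW0 : (W0 *m X <= W0)%MS).

Lemma stable_exists : odd t -> exists2 Fm : 'M_(d, n), row_free Fm /\ homS modS Fm & (Fm *m X <= Fm)%MS.
Proof.
move=> odt.
have ex i : exists r : 'rV[R]_t, T *m sig i *m X == \sum_j r 0 j *: sig j.
  have [||c ec] := @decomp (T *m sig i *m X); first exact: hT.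
    rewrite -eW0 -mulmxA; apply: submx_trans (submxMl _ _) _.
    apply: submx_trans sW0; apply: submxMr; rewrite eW0 (esig i).
    exact: (sumsmx_sup i).
  by exists (\row_j c j); rewrite ec; apply/eqP; apply: eq_bigr => j _; rewrite mxE.
pose B := \matrix_(i, j) (xchoose (ex i)) 0 j.
have [lam /eigenvalueP [v vB nzv]] := odd_eig B odt.
pose Fm := \sum_i v 0 i *: sig i.
have hF : homS modS Fm by apply: homS_lin.
have d0 : (0 < d)%N by have [] := (mx_irrP _).1 irr.
have nzF : Fm != 0.
  apply: contra nzv => /eqP eF; apply/eqP/rowP => i; rewrite mxE.
  have e : (v 0 i)%:M = 0 :> 'M[R]_d.
    apply: (@indep (fun i => (v 0 i)%:M)).
    by rewrite -[RHS]eF; apply: eq_bigr => j _; rewrite mul_scalar_mx.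
  by have := congr1 (fun M : 'M[R]_d => M (Ordinal d0) (Ordinal d0)) e; rewrite !mxE eqxx mulr1n.
exists Fm; first by split=> //; apply: hom_free.
have PF : T *m Fm *m X = lam *: Fm.
  rewrite mulmx_sumr mulmx_suml.
  rewrite (eq_bigr (fun i => v 0 i *: \sum_j B i j *: sig j)); last first.
    move=> i _; rewrite -scalemxAr -scalemxAl (eqP (xchooseP (ex i))).
    by congr (_ *: _); apply: eq_bigr => j _; rewrite mxE.
  rewrite (eq_bigr (fun i => \sum_j (v 0 i * B i j) *: sig j)); last first.
    by move=> i _; rewrite scaler_sumr; apply: eq_bigr => j _; rewrite scalerA.
  rewrite exchange_big /= scaler_sumr; apply: eq_bigr => j _.
  rewrite -scaler_suml scalerA; congr (_ *: _).
  by have /rowP/(_ j) := vB; rewrite !mxE => <-.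
have -> : Fm *m X = invmx T *m (lam *: Fm) by rewrite -PF !mulmxA mulVmx // mul1mx.
by rewrite -scalemxAr; apply: scalemx_sub; apply: submxMl.
Qed.
End Decomp.
Section CharTw.
Variables (R : fieldType) (gT : finGroupType) (G H : {group gT}) (n : nat).
Variables (rG : mx_representation R G n).

Lemma repr_expg b m : b \in G -> rG (b ^+ m)%g = rG b ^+ m.
Proof.
move=> Gb; elim: m => [|m IH]; first by rewrite expg0 expr0 repr_mx1.
by rewrite expgS repr_mxM ?groupX // IH exprS mulmxE.
Qed.

Lemma char_tw (faithG : mx_faithful rG) (charHG : (H \char G)%g) (N : 'M[R]_n) :
  N \in unitmx -> normalizes_repr rG N -> twR H rG N /\ twL H rG N.
Proof.
move=> uN [nG1 nG2].
pose fN g := odflt 1%g [pick h in G | invmx N *m rG g *m N == rG h].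
have fNP g : g \in G -> fN g \in G /\ invmx N *m rG g *m N = rG (fN g).
  move=> Gg; rewrite /fN; case: pickP => [h /andP[Gh /eqP e] //|/= none].
  by have [h Gh e] := nG1 g Gg; have := none h; rewrite Gh e eqxx.
have injG := mx_faithful_inj faithG.
have fM : {in G &, {morph fN : x y / x * y}%g}.
  move=> x y Gx Gy; have [Gfx ex] := fNP x Gx; have [Gfy ey] := fNP y Gy.
  have [Gfxy exy] := fNP _ (groupM Gx Gy).
  apply: injG => //; first exact: groupM.
  rewrite (repr_mxM _ Gfx Gfy) -exy -ex -ey (repr_mxM _ Gx Gy).
  by rewrite !mulmxA (mulmxK uN).
pose f : {morphism G >-> gT} := Morphism fM.
have injf : ('injm f)%g.
  apply/injmP => x y Gx Gy /= e.
  have [_ ex] := fNP x Gx; have [_ ey] := fNP y Gy.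
  apply: injG => //; move: ex; rewrite e -ey => /(congr1 (fun M => N *m M *m invmx N)).
  by rewrite !mulmxA !(mulmxK uN) !mulmxV // !mul1mx.
have fG : (f @* G)%g = G.
  apply/eqP; rewrite eqEcard card_injm // leqnn andbT.
  apply/subsetP => z /morphimP [x Gx _ ->]; by have [] := fNP x Gx.
have /charP [sHG fixH] := charHG.
have fH := fixH f injf fG.
split.
- move=> h Hh; have Gh := subsetP sHG h Hh; have [_ e] := fNP h Gh.
  exists (fN h); first by rewrite -fH; apply: (mem_morphim f Gh Hh).
  by rewrite -e !mulmxA mulmxV // mul1mx.
- move=> h; rewrite -{1}fH => /morphimP [x Gx Hx ->] /=.
  exists x => //; have [_ e] := fNP x Gx.
  by rewrite -e !mulmxA mulmxV // mul1mx.
Qed.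

Lemma twR_mul X Y : twR H rG X -> twR H rG Y -> twR H rG (X *m Y).
Proof.
move=> tX tY h Hh; have [h1 H1 e1] := tX h Hh; have [h2 H2 e2] := tY h1 H1.
by exists h2 => //; rewrite mulmxA e1 -(mulmxA X (rG h1)) e2 mulmxA.
Qed.

Lemma twL_mul X Y : twL H rG X -> twL H rG Y -> twL H rG (X *m Y).
Proof.
move=> tX tY h Hh; have [h1 H1 e1] := tY h Hh; have [h2 H2 e2] := tX h1 H1.
by exists h2 => //; rewrite -(mulmxA X) e1 mulmxA e2 mulmxA.
Qed.

Lemma twR_rG (nsHG : (H <| G)%g) g : g \in G -> twR H rG (rG g).
Proof.
move=> Gg h Hh; have sHG := normal_sub nsHG; exists (h ^ g)%g.
  by rewrite memJ_norm // (subsetP (normal_norm nsHG)).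
have Gh := subsetP sHG h Hh.
by rewrite -!repr_mxM ?groupJ // (conjgC h g).
Qed.

Lemma twL_rG (nsHG : (H <| G)%g) g : g \in G -> twL H rG (rG g).
Proof.
move=> Gg h Hh; have sHG := normal_sub nsHG; exists (h ^ g^-1)%g.
  by rewrite memJ_norm // (subsetP (normal_norm nsHG)) ?groupV.
have Gh := subsetP sHG h Hh.
by rewrite -!repr_mxM ?groupJ ?groupV // (conjgCV g h).
Qed.
End CharTw.
Section Main.
Variables (R : realType) (gT : finGroupType) (G H : {group gT}) (n : nat).
Variables (rG : mx_representation R G n) (nsHG : (H <| G)%g).
Hypotheses (irrG : mx_irreducible rG) (oddn : odd n).
Local Notation sHG := (normal_sub nsHG).
Local Notation rH := (subg_repr rG sHG).
Variables (S : 'M[R]_n) (modS : mxmodule rH S) (simS : mxsimple rH S).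
Local Notation d := (\rank S).
Local Notation rS := (submod_repr modS).

Lemma main_core (E1S : E1_pair rS) (N : 'M[R]_n) : N \in unitmx -> finite_order_mx N ->
  normalizes_repr rG N -> twR H rG N -> twL H rG N -> E1_triple rG N.
Proof.
move=> uN [k k0 Nk] [nG1 nG2] tRN tLN.
have nR a : a \in G -> exists2 a', a' \in G & rG a *m N = N *m rG a'.
  move=> Ga; have [a' Ga' e] := nG1 a Ga; exists a' => //.
  by rewrite -e !mulmxA mulmxV // mul1mx.
have nL a : a \in G -> exists2 a', a' \in G & N *m rG a = rG a' *m N.
  move=> Ga; have [a' Ga' e] := nG2 a Ga; exists a' => //.
  by rewrite -e !mulmxA mulmxV // mul1mx.
have irrS : mx_irreducible rS := (submod_mx_irr modS).2 simS.
case: (classic (E1_triple rG N)) => // nE; suff : false by [].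
apply: (socle_exists rH) => sH; exfalso; apply: nE.
have simSN := twist_simple uN tLN tRN simS.
pose W0 : sH := PackSocle (component_socle sH simS).
pose W1 : sH := PackSocle (component_socle sH simSN).
have eW0 : (W0 : 'M_n) = component_mx rH S := PackSocleK _.
have eW1 : (W1 : 'M_n) = component_mx rH (S *m N) := PackSocleK _.
have [y Gy eCl] : exists2 y, y \in G & (Clifford_action sH) W0 y = W1.
  have [y Gy e] := atransP2in (subxx G) (Clifford_atrans irrG sH) (in_setT W0) (in_setT W1).
  by exists y.
set W := component_mx rH S.
have sWN : (W *m N <= W *m rG y)%MS.
  apply: submx_trans (twist_component uN tLN tRN simS) _.
  rewrite -eW1 -eCl (val_Clifford_act W0 Gy) eW0.
  exact: submx_refl.
have [y0 Gy0 ey0] := nL y^-1%g (groupVr Gy).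
pose X := rG y0 *m N.
have uX : X \in unitmx by rewrite unitmx_mul repr_mx_unit.
have tRX : twR H rG X := twR_mul (twR_rG rG nsHG Gy0) tRN.
have tLX : twL H rG X := twL_mul (twL_rG rG nsHG Gy0) tLN.
have sWX : (W *m X <= W)%MS.
  rewrite /X -ey0 mulmxA; apply: submx_trans (submxMr (rG y^-1%g) sWN) _.
  by rewrite -mulmxA -repr_mxM ?groupV // mulgV repr_mx1 mulmx1.
have Xm m : exists2 b, b \in G & X ^+ m = N ^+ m *m rG b.
  elim: m => [|m [b Gb e]]; first by exists 1%g; rewrite ?group1 // !expr0 repr_mx1 mulmx1.
  have [b' Gb' e'] := nR (b * y0)%g (groupM Gb Gy0).
  exists b' => //; rewrite exprSr -mulmxE e /X mulmxA -(mulmxA _ (rG b)).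
  by rewrite -repr_mxM // -mulmxA e' mulmxA exprSr mulmxE.
have Xfin : exists2 k', (0 < k')%N & X ^+ k' = 1.
  have [b Gb e] := Xm k; exists (k * #|G|)%N; first by rewrite muln_gt0 k0 cardG_gt0.
  by rewrite exprM e Nk mul1mx -repr_expg // expg_cardG // repr_mx1.
have [t [x_ /(_ W0) [Gx eSW dxW]]] := Clifford_component_basis irrG sH simS.
have rkW := Clifford_rank_components irrG W0.
pose Sq j := S *m rG (x_ W0 j).
have rW0 : \rank (W0 : 'M_n) = (t * d)%N.
  rewrite -(eqmx_rank (introT eqmxP eSW)) (mxdirectP dxW) /=.
  rewrite (eq_bigr (fun _ => d)) ?sum_nat_const ?card_ord //.
  by move=> j _; rewrite mxrankMfree // row_free_unit repr_mx_unit // Gx.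
have [odd_t odd_d] : odd t /\ odd d.
  have : odd (#|sH| * (t * d)) by rewrite -rW0 rkW.
  by rewrite !oddM => /and3P[].
have eWs : (W :=: \sum_j Sq j)%MS by rewrite /W -eW0; apply: eqmx_sym.
have simSq j : mxsimple rH (Sq j) := Clifford_simple simS (Gx j).
have sSqW j : (Sq j <= W)%MS by rewrite eWs (sumsmx_sup j).
have rSrb h : h \in H -> rS h *m row_base S = row_base S *m rG h.
  move=> Hh; have := val_submodJ modS 1%:M Hh; rewrite /val_submod /mulmxr !mul1mx; exact.
have homrb f : f \in unitmx -> (S <= dom_hom_mx rH f)%MS ->
    row_free (row_base S *m f) /\ homS modS (row_base S *m f).
  move=> uf hf; split.
    by rewrite /row_free mxrankMfree ?row_free_unit // (eqP (row_base_free S)).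
  move=> h Hh; rewrite mulmxA rSrb //.
  have /hom_mxP hb : (row_base S <= dom_hom_mx rH f)%MS by rewrite eq_row_base.
  by rewrite (hb h Hh).
have isoj j : exists f, [&& f \in unitmx, (S <= dom_hom_mx rH f)%MS & (S *m f == Sq j)%MS].
  have [f uf hf ef] := component_mx_iso simS (simSq j) (sSqW j).
  by exists f; rewrite uf hf /=; apply/eqmxP.
pose fj j := xchoose (isoj j).
pose sig j := row_base S *m fj j.
have fjP j : [/\ fj j \in unitmx, (S <= dom_hom_mx rH (fj j))%MS & (S *m fj j :=: Sq j)%MS].
  by have /and3P[? ? /eqmxP ?] := xchooseP (isoj j).
have fsig j : row_free (sig j) by have [? ? _] := fjP j; have [] := homrb (fj j).
have hsig j : homS modS (sig j) by have [? ? _] := fjP j; have [] := homrb (fj j).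
have esig j : (sig j :=: Sq j)%MS.
  have [_ _ e] := fjP j; exact: eqmx_trans (eqmxMr _ (eq_row_base S)) e.
have simSX := twist_simple uX tLX tRX simS.
have sSXW : (S *m X <= W)%MS := submx_trans (submxMr X (component_mx_id simS)) sWX.
have [f uf hf ef] := component_mx_iso simS simSX sSXW.
pose F1 := row_base S *m f; pose F0 := row_base S *m X.
have [fF1 hF1] := homrb f uf hf.
have sF0 : (F0 <= F1)%MS.
  by rewrite /F0 /F1 (eqmxMr X (eq_row_base S)) (eqmxMr f (eq_row_base S)) ef.
pose T' := F0 *m pinvmx F1.
have TF1 : T' *m F1 = F0 by rewrite mulmxKpV.
have canF1 : forall A B : 'M_d, A *m F1 = B *m F1 -> A = B.
  move=> A B e; apply/eqP; rewrite -subr_eq0 -(mulmx_free_eq0 _ fF1) mulmxBl e subrr.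
  by [].
have uT' : T' \in unitmx.
  rewrite -row_free_unit /row_free eqn_leq rank_leq_row /=.
  have e : \rank (T' *m F1) = d.
    by rewrite TF1 /F0 mxrankMfree ?row_free_unit // (eqP (row_base_free S)).
  by apply: leq_trans (mxrankM_maxl T' F1); rewrite e.
pose T := invmx T'.
have hT : forall Fm, homS modS Fm -> homS modS (T *m Fm *m X).
  move=> Fm hFm h Hh; have [h' Hh' e] := tLX h Hh.
  have e2 : rS h' *m T' = T' *m rS h.
    apply: canF1; rewrite -(mulmxA (rS h')) TF1 /F0 mulmxA rSrb //.
    rewrite -(mulmxA (row_base S)) -e mulmxA -[row_base S *m X]/F0 -TF1.
    by rewrite -(mulmxA T') -hF1 // mulmxA.
  have e3 : T *m rS h' = rS h *m T.
    rewrite -[T *m rS h'](mulmxK uT') -(mulmxA T) e2 mulmxA mulVmx ?mul1mx //.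
  rewrite !mulmxA -e3 -(mulmxA T (rS h')) hFm // mulmxA.
  rewrite -(mulmxA (T *m Fm *m rG h') (rG y0) N) -(mulmxA (T *m Fm) (rG y0) N) -/X.
  by rewrite -(mulmxA (T *m Fm) (rG h') X) -e mulmxA.
have uT : T \in unitmx by rewrite unitmx_inv.
have [Fm [fF hF] sFX] := stable_exists fsig esig dxW hsig irrS odd_d
  uT hT eWs sWX odd_t.
have [h Hh [u uE nzu]] := E1_apply E1S fF hF uX tRX tLX Xfin sFX.
exists (h * y0)%g; first by rewrite groupM // (subsetP sHG).
apply/eigenvalueP; exists u => //; rewrite scale1r (repr_mxM _ (subsetP sHG h Hh) Gy0).
by rewrite -(mulmxA (rG h)).
Qed.
End Main.

Theorem lemma3 (R : realType) (gT : finGroupType) (G H : {group gT}) (n : nat)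
  (rG : mx_representation R G n)
  (oddn : odd n)
  (faithG : mx_faithful rG)
  (irrG : mx_irreducible rG)
  (charHG : (H \char G)%g)
  (S : 'M[R]_n)
  (modS : mxmodule (subg_repr rG (char_sub charHG)) S)
  (simS : mxsimple (subg_repr rG (char_sub charHG)) S) :
  E1_pair (submod_repr modS) -> E1_pair rG.
Proof.
have nsHG := char_normal charHG.
have e : char_sub charHG = normal_sub nsHG := bool_irrelevance _ _.
move=> E1S N uN fN nN.
have [tR tL] := char_tw faithG charHG uN nN.
move: modS simS E1S; rewrite e => modS' simS' E1S'.
exact: (main_core irrG oddn simS' E1S' uN fN nN tR tL).
Qed.
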